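(* Let $A$ be a finitely generated associative $\mathbb{C}$-algebra. The product $a\star b:=\frac12(ab+ba)$ is associative on $A_\star:=(A/M_3(A),\star)$, and for every $k\ge1$ the action $a\star n:=\frac12(an+na)$, for $a\in A_\star$, $n\in N_k(A)$, is well-defined and makes $N_k(A)$ into an $A_\star$-module.
   Context: For an associative algebra $A$: $L_1=A$, $L_k=[A,L_{k-1}]$, $M_k=AL_kA$ (two-sided ideal generated by $L_k$), $N_k=M_k/M_{k+1}$. *)

(* Defs.v *)
From mathcomp Require Import all_boot all_algebra.
From mathcomp.real_closed Require Import complex.
From mathcomp Require Import Rstruct.
Set Implicit Arguments.
Unset Strict Implicit.
Unset Printing Implicit Defensive.
Import GRing.Theory.
Local Open Scope ring_scope.

Definition CC : fieldType := complex Rdefinitions.R.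

Section LCS.
Variable A : algType CC.

Definition fin_gen_alg : Prop :=
  exists gens : seq A,
    forall S : A -> Prop,
      S 1 ->
      (forall x y, S x -> S y -> S (x + y)) ->
      (forall (c : CC) x, S x -> S (c *: x)) ->
      (forall x y, S x -> S y -> S (x * y)) ->
      (forall g, g \in gens -> S g) ->
      forall x, S x.

Definition span (S : A -> Prop) : A -> Prop :=
  fun x => exists s : seq (CC * A),
    (forall p, p \in s -> S p.2) /\ x = \sum_(p <- s) p.1 *: p.2.

Definition commA (X : A -> Prop) : A -> Prop :=
  span (fun y => exists a x, X x /\ y = a * x - x * a).

(* Lower central series: lcs k = L_k, with L_1 = A, L_k = [A, L_{k-1}].
   (lcs 0 is set to A as well; it is never used.) *)
Fixpoint lcs (k : nat) : A -> Prop :=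
  match k with
  | 0 => fun _ => True
  | k'.+1 => if k' is 0 then fun _ => True else commA (lcs k')
  end.

Definition Mk (k : nat) : A -> Prop :=
  span (fun y => exists a l b, lcs k l /\ y = a * l * b).

Definition jprod (a b : A) : A := (2%:R : CC)^-1 *: (a * b + b * a).

End LCS.

(* Main.v *)
Require Import Defs.
From mathcomp Require Import all_boot all_algebra.
From mathcomp.real_closed Require Import complex.
From mathcomp Require Import Rstruct.
Import GRing.Theory Num.Theory.
Local Open Scope ring_scope.

Definition com {A : algType CC} (x y : A) : A := x * y - y * x.

Lemma span_sub {A : algType CC} (S : A -> Prop) x : S x -> Defs.span S x.
Proof. by move=> Sx; exists [:: (1, x)]; split; [move=> p; rewrite inE => /eqP -> | rewrite big_seq1 scale1r]. Qed.

Lemma span_ind {A : algType CC} (S P : A -> Prop) :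
  P 0 -> (forall x y, P x -> P y -> P (x + y)) -> (forall c x, P x -> P (c *: x)) ->
  (forall x, S x -> P x) -> forall x, Defs.span S x -> P x.
Proof.
move=> P0 PD PZ PS x [s [Hs ->]]; elim: s Hs => [|p s IH] Hs; first by rewrite big_nil.
rewrite big_cons; apply: PD; last by apply: IH => q qs; apply: Hs; rewrite inE qs orbT.
by apply: PZ; apply: PS; apply: Hs; rewrite inE eqxx.
Qed.

Lemma span0 {A : algType CC} (S : A -> Prop) : Defs.span S 0.
Proof. by exists [::]; split => //; rewrite big_nil. Qed.

Lemma spanD {A : algType CC} (S : A -> Prop) x y : Defs.span S x -> Defs.span S y -> Defs.span S (x + y).
Proof.
move=> [s [Hs ->]] [t [Ht ->]]; exists (s ++ t); split; last by rewrite big_cat.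
by move=> p; rewrite mem_cat => /orP [/Hs|/Ht].
Qed.

Lemma spanZ {A : algType CC} (S : A -> Prop) c x : Defs.span S x -> Defs.span S (c *: x).
Proof.
move=> [s [Hs ->]]; exists [seq (c * p.1, p.2) | p <- s]; split.
  by move=> p /mapP [q qs ->]; exact: (Hs q qs).
rewrite big_map scaler_sumr; apply: eq_bigr => p _; by rewrite scalerA.
Qed.

Lemma spanN {A : algType CC} (S : A -> Prop) x : Defs.span S x -> Defs.span S (- x).
Proof. by move=> h; rewrite -scaleN1r; apply: spanZ. Qed.

Lemma spanB {A : algType CC} (S : A -> Prop) x y : Defs.span S x -> Defs.span S y -> Defs.span S (x - y).
Proof. by move=> hx hy; apply: spanD => //; apply: spanN. Qed.

Lemma spanDl {A : algType CC} (S : A -> Prop) x y : Defs.span S (x + y) -> Defs.span S y -> Defs.span S x.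
Proof. by move=> hxy hy; rewrite -(addrK y x); apply: spanB. Qed.

Lemma MkL {A : algType CC} k (x y : A) : Mk k x -> Mk k (y * x).
Proof.
move: x; apply: span_ind.
- by rewrite mulr0; apply: span0.
- by move=> x z hx hz; rewrite mulrDr; apply: spanD.
- by move=> c x hx; rewrite -scalerAr; apply: spanZ.
- move=> x [a [l [b [hl ->]]]]; apply: span_sub; exists (y * a), l, b; split => //.
  by rewrite !mulrA.
Qed.

Lemma MkR {A : algType CC} k (x y : A) : Mk k x -> Mk k (x * y).
Proof.
move: x; apply: span_ind.
- by rewrite mul0r; apply: span0.
- by move=> x z hx hz; rewrite mulrDl; apply: spanD.
- by move=> c x hx; rewrite -scalerAl; apply: spanZ.
- move=> x [a [l [b [hl ->]]]]; apply: span_sub; exists a, l, (b * y); split => //.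
  by rewrite !mulrA.
Qed.

Lemma Mk_lcs {A : algType CC} k (l : A) : lcs k l -> Mk k l.
Proof. by move=> h; apply: span_sub; exists 1, l, 1; rewrite mul1r mulr1. Qed.

Lemma Mkcom {A : algType CC} k (x y : A) : Mk k x -> Mk k (com y x) /\ Mk k (com x y).
Proof. by move=> h; split; apply: spanB; by [apply: MkL | apply: MkR]. Qed.

Lemma lcsS {A : algType CC} k (l : A) : (1 <= k)%N -> lcs k l -> forall x, lcs k.+1 (com x l).
Proof. by case: k => // k _ hl x; apply: span_sub; exists x, l. Qed.

Lemma lcs2 {A : algType CC} (x y : A) : lcs 2 (com x y).
Proof. by apply: lcsS. Qed.

Lemma com_mulr {A : algType CC} (a x y : A) : com a (x * y) = com a x * y + x * com a y.
Proof. by rewrite /com mulrBl mulrBr !mulrA addrA subrK. Qed.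

Lemma com_mull {A : algType CC} (p q r : A) : com (p * q) r = p * com q r + com p r * q.
Proof. by rewrite /com mulrBl mulrBr !mulrA addrA subrK. Qed.

Lemma comDr {A : algType CC} (a x y : A) : com a (x + y) = com a x + com a y.
Proof. by rewrite /com mulrDl mulrDr opprD addrACA. Qed.

Lemma comDl {A : algType CC} (a x y : A) : com (x + y) a = com x a + com y a.
Proof. by rewrite /com mulrDl mulrDr opprD addrACA. Qed.

Lemma jacobi {A : algType CC} (u v l : A) : com (com u v) l = com u (com v l) - com v (com u l).
Proof.
rewrite /com !(mulrBl, mulrBr) !mulrA !opprB.
(* goal: uvl - vul - (luv - lvu) = (uvl - ulv - (vlu - lvu)) - (vul - vlu - (ulv - luv)) *)
rewrite [RHS]addrACA !subrKA [LHS]addrACA [RHS]addrACA; congr (_ + _); exact: addrC.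
Qed.
Lemma jprodDl {A : algType CC} (a b n : A) : jprod (a + b) n = jprod a n + jprod b n.
Proof. by rewrite /jprod mulrDl mulrDr -scalerDr addrACA. Qed.

Lemma jprodDr {A : algType CC} (a n m : A) : jprod a (n + m) = jprod a n + jprod a m.
Proof. by rewrite /jprod mulrDl mulrDr -scalerDr addrACA. Qed.

Lemma jprodBl {A : algType CC} (a a' b : A) : jprod (a - a') b = jprod a b - jprod a' b.
Proof. by rewrite /jprod mulrBl mulrBr -scalerBr opprD addrACA. Qed.

Lemma jprodBr {A : algType CC} (a a' b : A) : jprod b (a - a') = jprod b a - jprod b a'.
Proof. by rewrite /jprod mulrBl mulrBr -scalerBr opprD addrACA. Qed.

Lemma two_neq0 : (2%:R : CC) != 0.
Proof. have : (2%:R : (Rdefinitions.R)[i]) != 0 by rewrite pnatr_eq0. exact. Qed.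

Lemma jprod1 {A : algType CC} (n : A) : jprod 1 n = n.
Proof.
rewrite /jprod mul1r mulr1 -mulr2n -[n *+ 2]scaler_nat scalerA mulVf ?scale1r //.
exact: two_neq0.
Qed.

Lemma jprod_assoc {A : algType CC} (a b c : A) :
  jprod (jprod a b) c - jprod a (jprod b c) =
  ((2%:R : CC)^-1 * (2%:R : CC)^-1) *: com b (com a c).
Proof.
rewrite /jprod -!scalerAl -!scalerAr -!scalerDr !scalerA -scalerBr; congr (_ *: _).
rewrite /com !(mulrDl, mulrDr, mulrBl, mulrBr) !mulrA.
rewrite opprD addrACA [a * b * c + _]addrC addrKA [b * c * a + _]addrC addrKA.
rewrite mulrN mulNr opprD opprK !mulrA [- (a * c * b) + _]addrC addrACA [RHS]addrACA; congr (_ + _); exact: addrC.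
Qed.

Lemma jprodM {A : algType CC} k (a n : A) : Mk k n -> Mk k (jprod a n) /\ Mk k (jprod n a).
Proof. by move=> h; split; apply: spanZ; apply: spanD; by [apply: MkL | apply: MkR]. Qed.

Lemma MkcomL {A : algType CC} k (x y : A) : Mk k x -> Mk k (com y x).
Proof. by move=> h; case: (@Mkcom A k x y h). Qed.

Lemma comZr {A : algType CC} (y m : A) (c : CC) : com y (c *: m) = c *: com y m.
Proof. by rewrite /com -scalerAr -scalerAl -scalerBr. Qed.

Lemma com0r {A : algType CC} (y : A) : com y 0 = 0.
Proof. by rewrite /com mulr0 mul0r subr0. Qed.

Lemma central {A : algType CC} j (l x : A) : lcs j.+1 l ->
  Mk j.+2 (com x l) /\ Mk j.+2 (com l x).
Proof.
move=> hl; have h : Mk j.+2 (com x l) by apply: Mk_lcs; apply: lcsS.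
split => //; have -> : com l x = - com x l by rewrite /com opprB.
exact: spanN.
Qed.

Lemma deltacom {A : algType CC} j (u v l' : A) : lcs j.+1 l' -> Mk j.+3 (com (com u v) l').
Proof.
move=> hl; rewrite jacobi; apply: spanB; apply: Mk_lcs; apply: lcsS => //; exact: lcsS.
Qed.

Lemma CoreGen {A : algType CC} j (y z w l : A) : lcs j.+1 l -> Mk j.+2 (com y (com z w) * l).
Proof.
case: j => [|i].
  move=> _; rewrite /com mulrBl; apply: spanB; apply: span_sub.
    by exists y, (z * w - w * z), l; split; [exact: (lcs2 z w) | by []].
  by exists 1, (z * w - w * z), (y * l); split; [exact: (lcs2 z w) | by rewrite mul1r mulrA].
move: l; apply: span_ind.
- by rewrite mulr0; apply: span0.
- by move=> x x' hx hx'; rewrite mulrDr; apply: spanD.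
- by move=> c x hx; rewrite -scalerAr; apply: spanZ.
move=> l [a [x [hx ->]]].
set cc := com z w.
have H : Mk i.+3 (com (com y (cc * a)) x) by exact: deltacom.
rewrite com_mulr comDl !com_mull addrA in H.
rewrite -/(com a x).
have MkDl : forall (p q : A), Mk i.+3 (p + q) -> Mk i.+3 q -> Mk i.+3 p.
  by move=> p q; apply: spanDl.
apply: (MkDl _ _ (MkDl _ _ (MkDl _ _ H _) _) _).
- by apply: MkR; exact: deltacom.
- by apply: MkL; exact: deltacom.
- by apply: MkR; exact: deltacom.
Qed.

Lemma Core {A : algType CC} j (c l : A) : lcs 3 c -> lcs j.+1 l -> Mk j.+2 (c * l).
Proof.
move=> hc hl; move: c hc; apply: span_ind.
- by rewrite mul0r; apply: span0.
- by move=> x x' hx hx'; rewrite mulrDl; apply: spanD.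
- by move=> c x hx; rewrite -scalerAl; apply: spanZ.
move=> c [y [m [hm ->]]].
move: m hm; apply: span_ind.
- by rewrite -/(com y 0) com0r mul0r; apply: span0.
- by move=> x x' hx hx'; rewrite -/(com y (x + x')) comDr mulrDl; apply: spanD.
- by move=> d x hx; rewrite -/(com y (d *: x)) comZr -scalerAl; apply: spanZ.
move=> m [z [w [_ ->]]]; exact: CoreGen.
Qed.

Lemma Core' {A : algType CC} j (c l : A) : lcs 3 c -> lcs j.+1 l -> Mk j.+2 (l * c).
Proof.
move=> hc hl; have -> : l * c = c * l - com c l by rewrite /com opprB addrC subrK.
apply: spanB; first exact: Core.
by case: (@central _ _ _ c hl).
Qed.

Lemma L3com {A : algType CC} (a b w : A) : lcs 3 (com b (com a w)).
Proof. by apply: lcsS => //; apply: lcs2. Qed.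

Lemma L1 {A : algType CC} j (n a b : A) : Mk j.+1 n -> Mk j.+2 (com b (com a n)).
Proof.
move: n; apply: span_ind.
- by rewrite !com0r; apply: span0.
- by move=> x x' hx hx'; rewrite (comDr a x x') (comDr b (com a x)); apply: spanD.
- by move=> d x hx; rewrite (comZr a) (comZr b); apply: spanZ.
move=> n [u [l [v [hl ->]]]].
have -> : u * l * v = l * (u * v) + com u l * v.
  by rewrite /com mulrBl !mulrA addrC subrK.
rewrite (comDr a) (comDr b); apply: spanD; last first.
  by apply: MkcomL; apply: MkcomL; apply: MkR; apply: (@central _ _ _ u hl).1.
rewrite (com_mulr a l) (comDr b); apply: spanD.
  by apply: MkcomL; apply: MkR; apply: (@central _ _ _ a hl).1.
rewrite (com_mulr b l); apply: spanD.
  by apply: MkR; apply: (@central _ _ _ b hl).1.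
apply: Core' => //; exact: L3com.
Qed.

Lemma Mk3prod {A : algType CC} j (a n : A) : Mk 3 a -> Mk j.+1 n ->
  Mk j.+2 (a * n) /\ Mk j.+2 (n * a).
Proof.
move=> ha hn; move: a ha; apply: span_ind.
- by rewrite mul0r mulr0; split; apply: span0.
- by move=> x x' [h1 h2] [h3 h4]; rewrite mulrDl mulrDr; split; apply: spanD.
- by move=> d x [h1 h2]; rewrite -scalerAl -scalerAr; split; apply: spanZ.
move=> a [x [c [y [hc ->]]]].
move: n hn; apply: span_ind.
- by rewrite mul0r mulr0; split; apply: span0.
- by move=> n n' [h1 h2] [h3 h4]; rewrite mulrDl mulrDr; split; apply: spanD.
- by move=> d n [h1 h2]; rewrite -scalerAl -scalerAr; split; apply: spanZ.
move=> n [u [l [v [hl ->]]]].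
split.
  have -> : x * c * y * (u * l * v) = x * (c * (y * u * l)) * v by rewrite !mulrA.
  apply: MkR; apply: MkL.
  have -> : c * (y * u * l) = c * l * (y * u) + c * com (y * u) l.
    by rewrite /com mulrBr !mulrA addrC subrK.
  apply: spanD; first by apply: MkR; apply: Core.
  by apply: MkL; apply: (@central _ _ _ _ hl).1.
have -> : u * l * v * (x * c * y) = u * (l * (v * x * c)) * y by rewrite !mulrA.
apply: MkR; apply: MkL.
have -> : l * (v * x * c) = v * x * (l * c) + com l (v * x) * c.
  by rewrite /com mulrBl !mulrA addrC subrK.
apply: spanD; first by apply: MkL; apply: Core'.
by apply: MkR; apply: (@central _ _ _ _ hl).2.
Qed.

Theorem proposition2p6 (A : algType CC) (hA : fin_gen_alg A) :
  (* (i) star is well defined on A_star = A / M_3(A) *)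
  (forall a a' b : A, Mk 3 (a - a') ->
     Mk 3 (jprod a b - jprod a' b) /\ Mk 3 (jprod b a - jprod b a')) /\
  (* (ii) star is associative on A_star *)
  (forall a b c : A, Mk 3 (jprod (jprod a b) c - jprod a (jprod b c))) /\
  (* (iii) for every k >= 1, a star n is a well-defined action of A_star
     on N_k(A) = M_k(A) / M_{k+1}(A) making it an A_star-module *)
  (forall k : nat, (1 <= k)%N ->
     (* maps M_k to M_k *)
     (forall (a n : A), Mk k n -> Mk k (jprod a n)) /\
     (* independent of the representative of n in N_k *)
     (forall (a n : A), Mk k.+1 n -> Mk k.+1 (jprod a n)) /\
     (* independent of the representative of a in A_star *)
     (forall (a n : A), Mk 3 a -> Mk k n -> Mk k.+1 (jprod a n)) /\
     (* module axioms (modulo M_{k+1}) *)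
     (forall n : A, Mk k n -> Mk k.+1 (jprod 1 n - n)) /\
     (forall (a b n : A), Mk k n ->
        Mk k.+1 (jprod (a + b) n - (jprod a n + jprod b n))) /\
     (forall (a n m : A), Mk k n -> Mk k m ->
        Mk k.+1 (jprod a (n + m) - (jprod a n + jprod a m))) /\
     (forall (a b n : A), Mk k n ->
        Mk k.+1 (jprod (jprod a b) n - jprod a (jprod b n)))).
Proof.
split.
  move=> a a' b h; rewrite -jprodBl -jprodBr; split.
    exact: (@jprodM _ _ b _ h).2.
  exact: (@jprodM _ _ b _ h).1.
split.
  move=> a b c; rewrite jprod_assoc; apply: spanZ; apply: Mk_lcs; exact: L3com.
case=> [//|j] _.
split; first by move=> a n h; exact: (@jprodM _ _ a _ h).1.
split; first by move=> a n h; exact: (@jprodM _ _ a _ h).1.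
split.
  move=> a n ha hn; case: (@Mk3prod _ _ _ _ ha hn) => h1 h2.
  by apply: spanZ; apply: spanD.
split; first by move=> n _; rewrite jprod1 subrr; apply: span0.
split; first by move=> a b n _; rewrite jprodDl subrr; apply: span0.
split; first by move=> a n m _ _; rewrite jprodDr subrr; apply: span0.
move=> a b n hn; rewrite jprod_assoc; apply: spanZ; exact: L1.
Qed.
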